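(* (1) Let $T_{ab|cd}$ be the binary 4-taxon tree with split $ab|cd$, and consider the $2$-state GM+I model on it. Then the cubic polynomials $$f_1=\det\begin{pmatrix} p_{1112} & p_{1121} & p_{1122}\\ p_{1212} & p_{1221} & p_{1222}\\ p_{2112} & p_{2121} & p_{2122}\end{pmatrix},\qquad f_2=\det\begin{pmatrix} p_{1211} & p_{1212} & p_{1221}\\ p_{2111} & p_{2112} & p_{2121}\\ p_{2211} & p_{2212} & p_{2221}\end{pmatrix}$$ are phylogenetic invariants. (These are the two $3\times 3$ minors of the flattening $F_{ab|cd}$ that involve neither $p_{1111}$ nor $p_{2222}$.) (2) More generally, let $n\ge 4$, $\kappa\ge 2$, and consider the $\kappa$-state GM+I model on an $n$-taxon tree $T$. Then for each edge $e$ of $T$, every $(\kappa+1)\times(\kappa+1)$ minor of the flattening $F_e$ of $P$ that involves none of the entries $p_{ii\dots i}$, $i\in\{1,\dots,\kappa\}$, is a phylogenetic invariant.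
   Context: An $n$-taxon tree is a tree whose $n$ leaves are labeled by taxa $a_1,\dots,a_n$ and whose internal vertices all have valence at least 3; it is binary if all internal vertices have valence 3. The $\kappa$-state GM+I (general Markov plus invariable sites) model on $T$ with edge set $E$ has parameters: $\delta\in[0,1]$; a probability vector $\pi_I\in[0,1]^\kappa$; a probability vector $\pi_{GM}$ (root distribution) at a chosen root vertex $r$; and for each edge $e=(v\to w)$ (edges directed away from $r$) a $\kappa\times\kappa$ Markov matrix $M_e$ (nonnegative entries, rows summing to 1). The joint distribution at the leaves is the $n$-dimensional $\kappa\times\dots\times\kappa$ array $P=\phi_T(\mathbf s)$ with entries $$p_{i_1\dots i_n}=\delta\,\epsilon(i_1,\dots,i_n)\pi_I(i_1)+(1-\delta)\sum_{(j_v)}\pi_{GM}(j_r)\prod_{e=(u\to w)\in E}M_e(j_u,j_w),$$ where $\epsilon(i_1,\dots,i_n)=1$ if all $i_k$ are equal and $0$ otherwise, and the sum runs over all assignments of states $j_v\in\{1,\dots,\kappa\}$ to all vertices $v$ of $T$ with $j_v=i_k$ when $v$ is the leaf labeled $a_k$. The entries are polynomials in the parameters; extend $\phi_T$ to complex parameter values by the same formulas. A phylogenetic invariant is a polynomial in the $\kappa^n$ indeterminates $p_{i_1\dots i_n}$ vanishing on $\phi_T(\mathbf s)$ for all stochastic parameters $\mathbf s$ (equivalently, on the image of the complexified map). For an edge $e$ of $T$ inducing the split of the taxa into sets $A|B$, the flattening $F_e$ is the $\kappa^{|A|}\times\kappa^{|B|}$ matrix whose rows are indexed by state assignments to taxa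 in $A$, columns by state assignments to taxa in $B$, with entry the corresponding $p_{i_1\dots i_n}$. For $T_{ab|cd}$ with indices in taxon order $a,b,c,d$, $F_{ab|cd}$ is the $4\times4$ matrix with rows indexed by $ab$-states $11,12,21,22$ and columns by $cd$-states $11,12,21,22$. *)

(* Defs.v *)
From HB Require Import structures.
From mathcomp Require Import all_boot all_order all_algebra.
From mathcomp Require Export reals.
Set Implicit Arguments. Unset Strict Implicit. Unset Printing Implicit Defensive.
Import Order.TTheory GRing.Theory Num.Theory.
Local Open Scope ring_scope.

(* Trees.  A tree on the finite vertex type V is given together with a      *)
(* chosen root r and a parent map par (par r = r, and every vertex reaches  *)
(* r by iterating par).  Its (undirected) edges are {par v, v} for v != r,  *)
(* directed par v -> v, i.e. away from r.  Taxa a_1..a_n are 'I_n and       *)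
(* leaf t is the leaf labelled by taxon t.                                  *)
Section Tree.
Variables (n : nat) (V : finType) (r : V) (par : V -> V) (leaf : 'I_n -> V).

Definition below (w v : V) : bool := connect (frel par) w v.

Definition children (v : V) : {set V} := [set w | (w != r) && (par w == v)].

Definition valence (v : V) : nat := #|children v| + (v != r).

Definition is_rooted_tree : Prop :=
  par r = r /\ forall v, below v r.

Definition leaf_labelling : Prop :=
  injective leaf /\ forall v, (valence v == 1%N) = [exists t, leaf t == v].

Definition ntaxon_tree : Prop :=
  [/\ is_rooted_tree, leaf_labelling &
      forall v, valence v != 1%N -> (3 <= valence v)%N].

Definition binary_ntaxon_tree : Prop :=
  [/\ is_rooted_tree, leaf_labelling &
      forall v, valence v != 1%N -> valence v = 3%N].

(* the side A of the split A|B induced by the edge par v -> v (v != r):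
   the taxa below v *)
Definition split_set (v : V) : {set 'I_n} := [set t | below (leaf t) v].

Variables (R : realType) (k : nat).

Definition prob_vec (p : 'I_k -> R) : Prop :=
  (forall i, 0 <= p i) /\ \sum_i p i = 1.

Definition markov_mx (M : 'M[R]_k) : Prop :=
  (forall i j, 0 <= M i j) /\ forall i, \sum_j M i j = 1.

(* stochastic parameters; M v is the Markov matrix of edge par v -> v
   (only used for v != r) *)
Definition stochastic_params (delta : R) (piI piGM : 'I_k -> R)
    (M : V -> 'M[R]_k) : Prop :=
  [/\ 0 <= delta <= 1, prob_vec piI, prob_vec piGM &
      forall v, v != r -> markov_mx (M v)].

Definition gmi_dist (delta : R) (piI piGM : 'I_k -> R) (M : V -> 'M[R]_k)
    (x : {ffun 'I_n -> 'I_k}) : R :=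
  delta * (\sum_(i : 'I_k) (if [forall t, x t == i] then piI i else 0))
  + (1 - delta) *
    \sum_(j : {ffun V -> 'I_k} | [forall t, j (leaf t) == x t])
       (piGM (j r) * \prod_(v | v != r) M v (j (par v)) (j v)).

End Tree.

(* Flattenings and their minors.  For A = the A-side of a split, a row of   *)
(* F_e is a state assignment to the taxa in A and a column one to those in  *)
(* B = complement of A.  We represent them by full assignments, of which    *)
(* only the values on A (resp. on B) matter; the entry at (rho, sigma) is   *)
(* P at the merged assignment.                                              *)
Section Flattening.
Variables (R : realType) (n k : nat).

Definition merge (A : {set 'I_n}) (x y : {ffun 'I_n -> 'I_k})
  : {ffun 'I_n -> 'I_k} := [ffun t => if t \in A then x t else y t].

Definition flat_minor (P : {ffun 'I_n -> 'I_k} -> R) (A : {set 'I_n}) (m : nat)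
    (rho sigma : 'I_m -> {ffun 'I_n -> 'I_k}) : R :=
  \det (\matrix_(i, j) P (merge A (rho i) (sigma j))).

Definition distinct_rows (A : {set 'I_n}) (m : nat)
    (rho : 'I_m -> {ffun 'I_n -> 'I_k}) : Prop :=
  forall i i', i != i' -> exists2 t, t \in A & rho i t != rho i' t.

Definition distinct_cols (A : {set 'I_n}) (m : nat)
    (sigma : 'I_m -> {ffun 'I_n -> 'I_k}) : Prop :=
  forall j j', j != j' -> exists2 t, t \notin A & sigma j t != sigma j' t.

Definition avoids_constant (A : {set 'I_n}) (m : nat)
    (rho sigma : 'I_m -> {ffun 'I_n -> 'I_k}) : Prop :=
  forall i j, ~~ [exists c : 'I_k, [forall t, merge A (rho i) (sigma j) t == c]].

End Flattening.

(* Concrete 4-taxon, 2-state notation: p_{ijkl} with i,j,k,l in {1,2}.     *)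
(* Taxa a,b,c,d are 0,1,2,3 and state s in {1,2} is the ordinal s-1.      *)
Definition st4 (i j k l : nat) : {ffun 'I_4 -> 'I_2} :=
  [ffun t : 'I_4 => inord (nth 0%N [:: i; j; k; l] t).-1].

Definition pe (R : Type) (P : {ffun 'I_4 -> 'I_2} -> R) (i j k l : nat) : R :=
  P (st4 i j k l).

Definition mx3 (R : nzRingType) (a b c d e f g h i : R) : 'M[R]_3 :=
  \matrix_(x < 3, y < 3)
    nth 0 (nth [::] [:: [:: a; b; c]; [:: d; e; f]; [:: g; h; i]] x) y.

Definition f1 (R : comNzRingType) (P : {ffun 'I_4 -> 'I_2} -> R) : R :=
  \det (mx3 (pe P 1 1 1 2) (pe P 1 1 2 1) (pe P 1 1 2 2)
            (pe P 1 2 1 2) (pe P 1 2 2 1) (pe P 1 2 2 2)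
            (pe P 2 1 1 2) (pe P 2 1 2 1) (pe P 2 1 2 2)).

Definition f2 (R : comNzRingType) (P : {ffun 'I_4 -> 'I_2} -> R) : R :=
  \det (mx3 (pe P 1 2 1 1) (pe P 1 2 1 2) (pe P 1 2 2 1)
            (pe P 2 1 1 1) (pe P 2 1 1 2) (pe P 2 1 2 1)
            (pe P 2 2 1 1) (pe P 2 2 1 2) (pe P 2 2 2 1)).

Definition split_ab : {set 'I_4} := [set t : 'I_4 | (t < 2)%N].

(* Main.v *)
Require Import Defs.
From HB Require Import structures.
From mathcomp Require Import all_boot all_order all_algebra.
From mathcomp Require Import reals ring.
Import GRing.Theory Num.Theory.
Local Open Scope ring_scope.

Set Implicit Arguments. Unset Strict Implicit. Unset Printing Implicit Defensive.

Lemma det_mul_low (F : fieldType) (k : nat) (A : 'M[F]_(k.+1, k)) (B : 'M[F]_(k, k.+1)) :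
  \det (A *m B) = 0.
Proof.
apply/eqP; apply: contraT => H.
have : A *m B \in unitmx by rewrite unitmxE unitfE.
rewrite -row_free_unit /row_free => /eqP Hr.
by have := mulmx_max_rank A B; rewrite Hr ltnn.
Qed.

Lemma below_root (V : finType) (r : V) (par : V -> V) v :
  par r = r -> below par r v -> v = r.
Proof. by move=> hr /iter_findex <-; rewrite iter_fix. Qed.

Lemma below_par (V : finType) (par : V -> V) w v :
  below par w v -> w != v -> below par (par w) v.
Proof.
rewrite /below => /iter_findex; case: (findex _ _ _) => [<-|m]; first by rewrite eqxx.
by rewrite iterSr => <- _; apply: fconnect_iter.
Qed.

Lemma below_par_inv (V : finType) (par : V -> V) w v :
  below par (par w) v -> below par w v.
Proof. by move=> H; apply: connect_trans (fconnect1 par w) H. Qed.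

Lemma below_refl (V : finType) (par : V -> V) v : below par v v.
Proof. exact: connect0. Qed.

Lemma par_not_below (V : finType) (r : V) (par : V -> V) v :
  is_rooted_tree r par -> v != r -> ~~ below par (par v) v.
Proof.
move=> [hr hall] hv; apply/negP => H.
have Hit : forall m, below par (iter m par v) v.
  elim=> [|m IH]; first exact: below_refl.
  rewrite iterS; case: (eqVneq (iter m par v) v) => [->|ne]; first exact: H.
  exact: below_par.
have := iter_findex (hall v) => Er.
have := Hit (findex par v r); rewrite Er => /(below_root hr) Evr.
by rewrite Evr eqxx in hv.
Qed.

Definition mixf (V : finType) (k : nat) (D : {set V}) (j1 j2 : {ffun V -> 'I_k}) :
  {ffun V -> 'I_k} := [ffun w => if w \in D then j1 w else j2 w].

Lemma mix_eq (V : finType) (k : nat) (D : {set V}) (j0 j j1 j2 : {ffun V -> 'I_k}) :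
  [forall w, (w \notin D) ==> (j1 w == j0 w)] ->
  [forall w, (w \in D) ==> (j2 w == j0 w)] ->
  (j == mixf D j1 j2) = (j1 == mixf D j j0) && (j2 == mixf D j0 j).
Proof.
move=> /forallP H1 /forallP H2.
apply/eqP/andP => [->|[/eqP-> /eqP->]]; last first.
  by apply/ffunP => w; rewrite !ffunE; case: (w \in D).
split; apply/eqP/ffunP => w; rewrite !ffunE.
  by case: ifP => // hw; have := H1 w; rewrite hw /= => /eqP.
by case: ifP => // hw; have := H2 w; rewrite hw /= => /eqP.
Qed.

Lemma sum_split (R : comNzRingType) (V : finType) (k : nat) (D : {set V})
    (j0 : {ffun V -> 'I_k}) (F : {ffun V -> 'I_k} -> R) :
  \sum_j F j =
  \sum_(j1 : {ffun V -> 'I_k} | [forall w, (w \notin D) ==> (j1 w == j0 w)])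
   \sum_(j2 : {ffun V -> 'I_k} | [forall w, (w \in D) ==> (j2 w == j0 w)]) F (mixf D j1 j2).
Proof.
pose P1 := fun j1 : {ffun V -> 'I_k} => [forall w, (w \notin D) ==> (j1 w == j0 w)].
pose P2 := fun j2 : {ffun V -> 'I_k} => [forall w, (w \in D) ==> (j2 w == j0 w)].
rewrite -/(P1 _) -/(P2 _).
transitivity (\sum_(j1 | P1 j1) \sum_(j2 | P2 j2) \sum_j
   (if j == mixf D j1 j2 then F j else 0)); last first.
  apply: eq_bigr => j1 _; apply: eq_bigr => j2 _.
  by rewrite -big_mkcond big_pred1_eq.
symmetry; under eq_bigr => j1 _ do rewrite exchange_big.
rewrite exchange_big /=.
apply: eq_bigr => j _.
have P1j : P1 (mixf D j j0).
  by rewrite /P1; apply/forallP => w; rewrite ffunE; case: ifP => _; rewrite ?eqxx ?implybT.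
have P2j : P2 (mixf D j0 j).
  by rewrite /P2; apply/forallP => w; rewrite ffunE; case: ifP => _; rewrite ?eqxx ?implybT.
rewrite (bigD1 (mixf D j j0)) //= (bigD1 (mixf D j0 j)) //=.
rewrite (@mix_eq _ _ _ j0) // !eqxx /= big1 ?addr0; last first.
  by move=> j2 /andP[h2 ne]; rewrite (@mix_eq _ _ _ j0) // eqxx (negbTE ne).
rewrite big1 ?addr0 // => j1 /andP[h1 ne]; apply: big1 => j2 h2.
by rewrite (@mix_eq _ _ _ j0) // (negbTE ne).
Qed.

Lemma gm_factor (R : realType) (n k : nat) (V : finType) (r : V) (par : V -> V)
    (leaf : 'I_n -> V) (v : V) (j0 : {ffun V -> 'I_k}) (piGM : 'I_k -> R)
    (M : V -> 'M[R]_k) :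
  is_rooted_tree r par -> v != r ->
  exists a b : {ffun 'I_n -> 'I_k} -> 'I_k -> R, forall x y,
  \sum_(j : {ffun V -> 'I_k} | [forall t, j (leaf t) == Defs.merge (split_set par leaf v) x y t])
     (piGM (j r) * \prod_(w | w != r) M w (j (par w)) (j w))
  = \sum_(s < k) a x s * b y s.
Proof.
move=> Hroot hv; have hr := Hroot.1.
set A := split_set par leaf v.
pose D := [set w | below par w v].
pose P1 := fun j1 : {ffun V -> 'I_k} => [forall w, (w \notin D) ==> (j1 w == j0 w)].
pose P2 := fun j2 : {ffun V -> 'I_k} => [forall w, (w \in D) ==> (j2 w == j0 w)].
pose Lin := fun (x : {ffun 'I_n -> 'I_k}) (j1 : {ffun V -> 'I_k}) =>
   [forall t, (t \in A) ==> (j1 (leaf t) == x t)].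
pose Lout := fun (y : {ffun 'I_n -> 'I_k}) (j2 : {ffun V -> 'I_k}) =>
   [forall t, (t \notin A) ==> (j2 (leaf t) == y t)].
pose InW := fun j1 : {ffun V -> 'I_k} =>
   \prod_(w | (w \in D) && (w != v)) M w (j1 (par w)) (j1 w).
pose OutW := fun (j2 : {ffun V -> 'I_k}) (s : 'I_k) =>
   piGM (j2 r) * (\prod_(w | (w != r) && (w \notin D)) M w (j2 (par w)) (j2 w))
   * M v (j2 (par v)) s.
exists (fun x s => \sum_(j1 | P1 j1) (if Lin x j1 && (j1 v == s) then InW j1 else 0)).
exists (fun y s => \sum_(j2 | P2 j2) (if Lout y j2 then OutW j2 s else 0)).
move=> x y.
have leafD t : (leaf t \in D) = (t \in A) by rewrite !inE.
have rD : r \notin D.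
  by rewrite inE; apply/negP => /(below_root hr) E; rewrite E eqxx in hv.
have vD : v \in D by rewrite inE; apply: below_refl.
have pvD : par v \notin D by rewrite inE; exact: (par_not_below Hroot hv).
rewrite big_mkcond (sum_split D j0) /=.
transitivity (\sum_(j1 | P1 j1) \sum_(j2 | P2 j2)
   ((if Lin x j1 then InW j1 else 0) * (if Lout y j2 then OutW j2 (j1 v) else 0))).
  apply: eq_bigr => j1 _; apply: eq_bigr => j2 _.
  have -> : [forall t, mixf D j1 j2 (leaf t) == Defs.merge A x y t] = Lin x j1 && Lout y j2.
    apply/forallP/andP => [H|[/forallP H1 /forallP H2] t].
      split; apply/forallP => t; apply/implyP => ht; have := H t.
        by rewrite !ffunE leafD ht.
      by rewrite !ffunE leafD (negbTE ht).
    rewrite !ffunE leafD; case: ifP => ht.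
      by have := H1 t; rewrite ht.
    by have := H2 t; rewrite ht.
  case: (Lin x j1); case: (Lout y j2); rewrite /= ?mul0r ?mulr0 //.
  rewrite (bigID (fun w => w \in D)) /= (bigD1 v) /=; last by rewrite hv vD.
  rewrite /OutW /InW !ffunE (negbTE rD) (negbTE pvD) vD.
  have -> : \prod_(w | (w != r) && (w \in D) && (w != v))
      M w (mixf D j1 j2 (par w)) (mixf D j1 j2 w) =
      \prod_(w | (w \in D) && (w != v)) M w (j1 (par w)) (j1 w).
    apply: eq_big => [w|w /andP[/andP[_ wD] wv]].
      case wD: (w \in D); rewrite /= ?andbF //.
      by case: eqP => // E; move: rD; rewrite -E wD.
    have pwD : par w \in D.
      by rewrite inE; apply: below_par => //; move: wD; rewrite inE.
    by rewrite !ffunE wD pwD.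
  have -> : \prod_(w | (w != r) && (w \notin D))
      M w (mixf D j1 j2 (par w)) (mixf D j1 j2 w) =
      \prod_(w | (w != r) && (w \notin D)) M w (j2 (par w)) (j2 w).
    apply: eq_bigr => w /andP[_ wD].
    have pwD : par w \notin D.
      by apply: contra wD; rewrite !inE; apply: below_par_inv.
    by rewrite !ffunE (negbTE wD) (negbTE pwD).
  by ring.
symmetry.
under eq_bigr => s _ do rewrite big_distrl /=.
rewrite exchange_big /=; apply: eq_bigr => j1 _.
under eq_bigr => s _ do rewrite big_distrr /=.
rewrite exchange_big /=; apply: eq_bigr => j2 _.
rewrite (bigD1 (j1 v)) //= eqxx andbT big1 ?addr0 // => s ne.
by rewrite eq_sym (negbTE ne) andbF mul0r.
Qed.

Lemma gen_minor (R : realType) (n k : nat) (hk : (0 < k)%N) (V : finType) (r : V)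
    (par : V -> V) (leaf : 'I_n -> V) (v : V)
    (rho sigma : 'I_k.+1 -> {ffun 'I_n -> 'I_k}) (delta : R)
    (piI piGM : 'I_k -> R) (M : V -> 'M[R]_k) :
  is_rooted_tree r par -> v != r ->
  avoids_constant (split_set par leaf v) rho sigma ->
  flat_minor (gmi_dist r par leaf delta piI piGM M) (split_set par leaf v) rho sigma = 0.
Proof.
move=> Hroot hv Hav.
have [a [b Hab]] := @gm_factor R n k V r par leaf v [ffun _ => Ordinal hk] piGM M Hroot hv.
rewrite /flat_minor.
have -> : \matrix_(i, j) gmi_dist r par leaf delta piI piGM M
            (Defs.merge (split_set par leaf v) (rho i) (sigma j)) =
   (\matrix_(i < k.+1, s < k) ((1 - delta) * a (rho i) s)) *m
   (\matrix_(s < k, j < k.+1) b (sigma j) s).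
  apply/matrixP => i j; rewrite !mxE /gmi_dist.
  rewrite big1 ?mulr0 ?add0r; last first.
    move=> c _; case: ifP => // Hc; move: (Hav i j) => /negP; case.
    by apply/existsP; exists c.
  rewrite Hab big_distrr /=; apply: eq_bigr => s _.
  by rewrite !mxE mulrA.
exact: det_mul_low.
Qed.

Lemma merge_st4 a b c d a' b' c' d' :
  Defs.merge split_ab (st4 a b c d) (st4 a' b' c' d') = st4 a b c' d'.
Proof.
apply/ffunP => t; rewrite !ffunE inE.
by case: t => [[|[|[|[|t]]]] Ht].
Qed.

Lemma mergeC n k (A : {set 'I_n}) (x y : {ffun 'I_n -> 'I_k}) :
  Defs.merge (~: A) x y = Defs.merge A y x.
Proof. by apply/ffunP => t; rewrite !ffunE inE; case: (t \in A). Qed.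

Lemma nonconst4 (x : {ffun 'I_4 -> 'I_2}) (t1 t2 : 'I_4) :
  x t1 != x t2 -> ~~ [exists c, [forall t, x t == c]].
Proof.
move=> ne; apply/existsP => -[c /forallP H].
by move: ne; rewrite (eqP (H t1)) (eqP (H t2)) eqxx.
Qed.

Lemma part1_gen (R : realType) (V : finType) (r : V) (par : V -> V) (leaf : 'I_4 -> V)
   (v : V) (delta : R) (piI piGM : 'I_2 -> R) (M : V -> 'M[R]_2)
   (rho sigma : 'I_3 -> {ffun 'I_4 -> 'I_2}) :
  is_rooted_tree r par -> v != r ->
  split_set par leaf v = split_ab \/ split_set par leaf v = ~: split_ab ->
  (forall i j, ~~ [exists c, [forall t, Defs.merge split_ab (rho i) (sigma j) t == c]]) ->
  \det (\matrix_(i, j) gmi_dist r par leaf delta piI piGM M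
          (Defs.merge split_ab (rho i) (sigma j))) = 0.
Proof.
move=> Hroot hv [HA|HA] Hnc.
  have := @gen_minor R 4 2 isT V r par leaf v rho sigma delta piI piGM M Hroot hv.
  by rewrite /flat_minor HA; apply => i j; apply: Hnc.
have := @gen_minor R 4 2 isT V r par leaf v sigma rho delta piI piGM M Hroot hv.
rewrite /flat_minor HA => H; rewrite -det_tr -[RHS]H.
- by congr (\det _); apply/matrixP => i j; rewrite !mxE mergeC.
- by move=> i j; rewrite mergeC; apply: Hnc.
Qed.

Definition rho1 (i : 'I_3) := st4 (nth 0 [:: 1; 1; 2] i) (nth 0 [:: 1; 2; 1] i) 1 1.
Definition sig1 (j : 'I_3) := st4 1 1 (nth 0 [:: 1; 2; 2] j) (nth 0 [:: 2; 1; 2] j).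
Definition rho2 (i : 'I_3) := st4 (nth 0 [:: 1; 2; 2] i) (nth 0 [:: 2; 1; 2] i) 1 1.
Definition sig2 (j : 'I_3) := st4 1 1 (nth 0 [:: 1; 1; 2] j) (nth 0 [:: 1; 2; 1] j).

Lemma f1E (R : comNzRingType) (P : {ffun 'I_4 -> 'I_2} -> R) :
  f1 P = \det (\matrix_(i, j) P (Defs.merge split_ab (rho1 i) (sig1 j))).
Proof.
rewrite /f1; congr (\det _); apply/matrixP => i j; rewrite !mxE merge_st4.
by case: i => [[|[|[|i]]] Hi] //; case: j => [[|[|[|j]]] Hj].
Qed.

Lemma f2E (R : comNzRingType) (P : {ffun 'I_4 -> 'I_2} -> R) :
  f2 P = \det (\matrix_(i, j) P (Defs.merge split_ab (rho2 i) (sig2 j))).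
Proof.
rewrite /f2; congr (\det _); apply/matrixP => i j; rewrite !mxE merge_st4.
by case: i => [[|[|[|i]]] Hi] //; case: j => [[|[|[|j]]] Hj].
Qed.

Lemma nc1 i j : ~~ [exists c, [forall t, Defs.merge split_ab (rho1 i) (sig1 j) t == c]].
Proof.
rewrite merge_st4.
case: i => [[|[|[|i]]] Hi] //; case: j => [[|[|[|j]]] Hj] //=.
all: first [ apply: (@nonconst4 _ 0 3); by rewrite !ffunE /=; apply/eqP => /(congr1 (@nat_of_ord _)); rewrite !inordK
           | apply: (@nonconst4 _ 0 2); by rewrite !ffunE /=; apply/eqP => /(congr1 (@nat_of_ord _)); rewrite !inordK
           | apply: (@nonconst4 _ 0 1); by rewrite !ffunE /=; apply/eqP => /(congr1 (@nat_of_ord _)); rewrite !inordK ].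
Qed.

Lemma nc2 i j : ~~ [exists c, [forall t, Defs.merge split_ab (rho2 i) (sig2 j) t == c]].
Proof.
rewrite merge_st4.
case: i => [[|[|[|i]]] Hi] //; case: j => [[|[|[|j]]] Hj] //=.
all: first [ apply: (@nonconst4 _ 0 3); by rewrite !ffunE /=; apply/eqP => /(congr1 (@nat_of_ord _)); rewrite !inordK
           | apply: (@nonconst4 _ 0 2); by rewrite !ffunE /=; apply/eqP => /(congr1 (@nat_of_ord _)); rewrite !inordK
           | apply: (@nonconst4 _ 0 1); by rewrite !ffunE /=; apply/eqP => /(congr1 (@nat_of_ord _)); rewrite !inordK ].
Qed.
Theorem proposition5 (R : realType) :
  (* (1) binary 4-taxon tree T_{ab|cd}, 2-state GM+I model *)
  (forall (V : finType) (r : V) (par : V -> V) (leaf : 'I_4 -> V),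
     binary_ntaxon_tree r par leaf ->
     (exists2 v, v != r &
        split_set par leaf v = split_ab \/ split_set par leaf v = ~: split_ab) ->
     forall (delta : R) (piI piGM : 'I_2 -> R) (M : V -> 'M[R]_2),
       stochastic_params r delta piI piGM M ->
       f1 (gmi_dist r par leaf delta piI piGM M) = 0 /\
       f2 (gmi_dist r par leaf delta piI piGM M) = 0) /\
  (* (2) general n >= 4, kappa >= 2 *)
  (forall (n k : nat), (4 <= n)%N -> (2 <= k)%N ->
   forall (V : finType) (r : V) (par : V -> V) (leaf : 'I_n -> V),
     ntaxon_tree r par leaf ->
     forall (v : V), v != r ->
     forall (rho sigma : 'I_k.+1 -> {ffun 'I_n -> 'I_k}),
       distinct_rows (split_set par leaf v) rho ->
       distinct_cols (split_set par leaf v) sigma ->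
       avoids_constant (split_set par leaf v) rho sigma ->
     forall (delta : R) (piI piGM : 'I_k -> R) (M : V -> 'M[R]_k),
       stochastic_params r delta piI piGM M ->
       flat_minor (gmi_dist r par leaf delta piI piGM M)
                  (split_set par leaf v) rho sigma = 0).
Proof.
split.
  move=> V r par leaf [Hroot _ _] [v hv HA] delta piI piGM M _.
  split; [rewrite f1E | rewrite f2E]; apply: (part1_gen (v:=v)) => //.
    exact: nc1.
  exact: nc2.
move=> n k _ hk V r par leaf [Hroot _ _] v hv rho sigma _ _ Hav delta piI piGM M _.
exact: (@gen_minor R n k (ltnW hk) V r par leaf v rho sigma delta piI piGM M Hroot hv Hav).
Qed.
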